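(* The intersection of an $\ell_1$-convex set and an interval in $\mathbb{R}^n$ is $\ell_1$-convex.
   Context: A subset $Z\subseteq\mathbb{R}^n$ is $\ell_1$-convex if for all $z,z'\in Z$, with $D=\sum_i|z_i-z'_i|$, there is $\gamma\colon[0,D]\to Z$ with $\gamma(0)=z,\gamma(D)=z'$ and $\sum_i|\gamma_i(t)-\gamma_i(t')|=|t-t'|$ for all $t,t'$. An interval in $\mathbb{R}^n$ is a set $\prod_{i=1}^n I_i$ with each $I_i\subseteq\mathbb{R}$ a (possibly empty, possibly unbounded) interval. *)

(* Defs.v *)
From HB Require Import structures.
From mathcomp Require Import all_boot all_order all_algebra.
From mathcomp Require Import interval.
From mathcomp Require Import Rstruct.
From Stdlib Require Import Reals.
Set Implicit Arguments. Unset Strict Implicit. Unset Printing Implicit Defensive.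
Import Order.TTheory GRing.Theory Num.Theory.
Local Open Scope ring_scope.

Definition l1dist (n : nat) (x y : 'I_n -> R) : R := \sum_(i < n) `|x i - y i|.

Definition l1_convex (n : nat) (Z : ('I_n -> R) -> Prop) : Prop :=
  forall z z' : 'I_n -> R, Z z -> Z z' ->
    let D := l1dist z z' in
    exists gamma : R -> ('I_n -> R),
      gamma 0 = z /\ gamma D = z' /\
      (forall t, 0 <= t <= D -> Z (gamma t)) /\
      (forall t t', 0 <= t <= D -> 0 <= t' <= D ->
          l1dist (gamma t) (gamma t') = `|t - t'|).

(* An interval in R^n: a product of (possibly empty, possibly unbounded)
   real intervals, given by MathComp's [interval R] type. *)
Definition box (n : nat) (I : 'I_n -> interval R) : ('I_n -> R) -> Prop :=
  fun x => forall i, x i \in I i.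

(* Main.v *)
Require Import Defs.
From mathcomp Require Import all_boot all_order all_algebra interval Rstruct.
From Stdlib Require Import Reals.
From mathcomp Require Import lra.
Import Order.TTheory GRing.Theory Num.Theory.
Local Open Scope ring_scope.

Lemma itv_conv (i : interval R) (a b x : R) :
  a \in i -> b \in i -> a <= x -> x <= b -> x \in i.
Proof.
case: i => bl br; rewrite !itv_boundlr => /andP[la ra] /andP[lb rb] ax xb.
apply/andP; split.
  by apply: le_trans la _; rewrite leBSide /= ax.
by apply: le_trans rb; rewrite leBSide /= xb.
Qed.

Lemma between (a b x : R) :
  `|a - x| + `|x - b| = `|a - b| ->
  (a <= x /\ x <= b) \/ (b <= x /\ x <= a).
Proof.
move=> H.
have h1 := ler_norm (a - x). have h2 := ler_norm (x - b).
have h3 : - (a - x) <= `|a - x| by rewrite -normrN ler_norm.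
have h4 : - (x - b) <= `|x - b| by rewrite -normrN ler_norm.
have [ab|ba] := leP a b.
  have E : `|a - b| = b - a by rewrite distrC ger0_norm // subr_ge0.
  left; split; lra.
have E : `|a - b| = a - b by rewrite ger0_norm // subr_ge0 ltW.
right; split; lra.
Qed.

Theorem corollary1p9 (n : nat) (Z : ('I_n -> R) -> Prop) (I : 'I_n -> interval R) :
  l1_convex Z -> l1_convex (fun x => Z x /\ box I x).
Proof.
move=> HZ z z' [Zz Bz] [Zz' Bz'] /=.
have [g [g0 [gD [gZ gd]]]] := HZ z z' Zz Zz'.
set D := l1dist z z' in g0 gD gZ gd *.
have D0 : 0 <= D by rewrite /D /l1dist; apply: sumr_ge0 => i _.
exists g; split => //; split => //; split => //.
move=> t Ht; split; first exact: gZ.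
have Ht' := Ht; move/andP: Ht' => [t0 tD].
have d1 : l1dist z (g t) = t.
  by rewrite -{1}g0 gd ?lexx ?D0 // sub0r normrN ger0_norm.
have d2 : l1dist (g t) z' = D - t.
  by rewrite -{1}gD gd ?lexx ?D0 // distrC ger0_norm // subr_ge0.
have S : \sum_(i < n) (`|z i - g t i| + `|g t i - z' i| - `|z i - z' i|) = 0.
  rewrite sumrB big_split /=.
  by move: d1 d2; rewrite /l1dist /D => -> ->; rewrite /D /l1dist; lra.
have hpos : forall j : 'I_n, xpredT j ->
  0 <= `|z j - g t j| + `|g t j - z' j| - `|z j - z' j|.
  move=> j _ /=; rewrite subr_ge0.
  by rewrite (le_trans _ (ler_normD _ _)) // addrA subrK.
move=> i.
have Hi := psumr_eq0P (P := xpredT)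
  (F := fun i => `|z i - g t i| + `|g t i - z' i| - `|z i - z' i|) hpos S (i := i) isT.
have E : `|z i - g t i| + `|g t i - z' i| = `|z i - z' i|.
  by apply/eqP; rewrite -subr_eq0; apply/eqP; exact: Hi.
have [[l r]|[l r]] := @between _ _ _ E.
- by apply: (@itv_conv (I i) (z i) (z' i) (g t i)).
- by apply: (@itv_conv (I i) (z' i) (z i) (g t i)).
Qed.
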